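(* Let $r\ge1$ and let $\mathcal{R}$ be a Rouquier block of $\mathcal{A}_e^r$ which is not a core block. Let $(\boldsymbol\lambda,\mathbf{s})\in\mathcal{R}$ and write $\eta(\lambda^{(k)},s_k)=(\boldsymbol\rho^k,\mathbf{t}^k)$ for $1\le k\le r$. Then for all $1\le k\le r$ and all $0\le i<i'\le e-1$ we have $t^k_{i'}-t^k_i\ge-1$.
   Context: Fix an integer $e\ge 2$. A partition is a weakly decreasing sequence $\lambda=(\lambda_1,\lambda_2,\dots)$ of non-negative integers with finite sum $|\lambda|$; $\Lambda$ denotes the set of partitions and $\Lambda^{(m)}$ the set of $m$-multipartitions, i.e. $m$-tuples $\boldsymbol\lambda=(\lambda^{(1)},\dots,\lambda^{(m)})$ of partitions, with $|\boldsymbol\lambda|=\sum_k|\lambda^{(k)}|$. A $\beta$-set is a subset $B\subseteq\mathbb{Z}$ containing all sufficiently small integers and no sufficiently large ones. For $\lambda\in\Lambda$ and $s\in\mathbb{Z}$ set $B_s(\lambda)=\{\lambda_i-i+s : i\ge 1\}$; every $\beta$-set equals $B_s(\lambda)$ for a unique pair $(\lambda,s)$. Let $\mathcal{A}_e=\Lambda\times\mathbb{Z}$ (abacus configurations with $e$ runners) and $\mathcal{A}_e^m=\Lambda^{(m)}\times\mathbb{Z}^m$. Blocks: for $(\boldsymbol\lambda,\mathbf{s})\in\mathcal{A}_e^m$, its $e$-residue multiset is the multiset of the values $s_k+y-x \bmod e$ over all nodes $(x,y,k)$ with $x\ge1$, $1\le y\le\lambda^{(k)}_x$, $1\le k\le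 m$. Define $(\boldsymbol\lambda,\mathbf{s})\approx_e(\boldsymbol\mu,\mathbf{s}')$ iff $\mathbf{s}=\mathbf{s}'$, $|\boldsymbol\lambda|=|\boldsymbol\mu|$ and the $e$-residue multisets coincide. Its equivalence classes are called blocks. The map $\eta$: for $(\lambda,s)\in\mathcal{A}_e$ with $B=B_s(\lambda)$ and $0\le i<e$, the set $C_i=\{(b-i)/e : b\in B,\ b\equiv i \bmod e\}$ is a $\beta$-set, so $C_i=B_{t_i}(\rho_i)$ for a unique $(\rho_i,t_i)\in\Lambda\times\mathbb{Z}$; set $\eta(\lambda,s)=((\rho_0,\dots,\rho_{e-1}),(t_0,\dots,t_{e-1}))$. The $e$-weight of $\lambda$ is $\mathrm{wt}(\lambda)=\sum_i|\rho_i|$ (it is positive iff $\lambda$ has a removable $e$-rim hook). Rouquier: $(\lambda,s)\in\mathcal{A}_e$ with $\eta(\lambda,s)=(\boldsymbol\rho,\mathbf{t})$ is a Rouquier partition if $\mathrm{wt}(\lambda)\le t_{i+1}-t_i+1$ for all $0\le i<e-1$. $(\boldsymbol\lambda,\mathbf{s})\in\mathcal{A}_e^r$ is a Rouquier multipartition if $(\lambda^{(k)},s_k)$ is a Rouquier partition for every $1\le k\le r$. A block of $\mathcal{A}_e^r$ is a Rouquier block if all its elements are Rouquier multipartitions. A block $\mathcal{R}$ of $\mathcal{A}_e^r$ is a core block if for every $(\boldsymbol\lambda,\mathbf{s})\in\mathcal{R}$ every component $\lambda^{(k)}$ has $e$-weight $0$ (no removable $e$-rim hooks). *)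

(* Defs.v *)
From Stdlib Require ClassicalEpsilon.
From mathcomp Require Import all_boot all_order all_algebra.
Set Implicit Arguments. Unset Strict Implicit. Unset Printing Implicit Defensive.
Import Order.TTheory GRing.Theory Num.Theory.

(* A partition (type `part`): a weakly decreasing finite sequence of positive integers
   (trailing zeros of the infinite sequence omitted); lambda_x = nth 0 l (x-1). *)
Definition is_part (l : seq nat) : bool := sorted geq l && all (fun x => 0 < x) l.
Definition part := {l : seq nat | is_part l}.
Definition part0 : part := exist _ [::] erefl.

Definition psize (p : part) : nat := sumn (val p).

Definition beta_set (p : part) (s : int) : int -> Prop :=
  fun b => exists i : nat, (1 <= i)%N /\
    b = ((nth 0 (val p) i.-1)%:Z - i%:Z + s)%R.

(* C_i = { (b - i)/e : b in B, b = i mod e }, i.e. c in C_i iff e*c + i in B *)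
Definition runner (e : nat) (B : int -> Prop) (i : nat) : int -> Prop :=
  fun c => B (c * e%:Z + i%:Z)%R.

Definition is_eta (e : nat) (p : part) (s : int)
    (rho : nat -> part) (t : nat -> int) : Prop :=
  forall i : nat, (i < e)%N -> forall c : int,
    runner e (beta_set p s) i c <-> beta_set (rho i) (t i) c.

(* eta(lambda, s): the (unique) such pair; components indexed by i < e
   (values at i >= e are irrelevant). *)
Definition eta (e : nat) (p : part) (s : int) :
    (nat -> part) * (nat -> int) :=
  ClassicalEpsilon.epsilon (inhabits ((fun _ => part0), (fun _ => 0%R)))
    (fun q => is_eta e p s q.1 q.2).

Definition wt (e : nat) (p : part) (s : int) : nat :=
  \sum_(i < e) psize ((eta e p s).1 i).

Definition rouquier_part (e : nat) (p : part) (s : int) : Prop :=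
  forall i : nat, (i < e.-1)%N ->
    ((wt e p s)%:Z <= (eta e p s).2 i.+1 - (eta e p s).2 i + 1)%R.

Definition rouquier_multi (e r : nat) (lam : 'I_r -> part) (s : 'I_r -> int) : Prop :=
  forall k : 'I_r, rouquier_part e (lam k) (s k).

(* number of nodes (x,y) of lambda (x,y >= 1, y <= lambda_x) with
   residue s + y - x = j mod e *)
Definition res_count (e : nat) (p : part) (s : int) (j : nat) : nat :=
  \sum_(x < size (val p)) \sum_(y < nth 0 (val p) x)
     nat_of_bool (((s + (y.+1)%:Z - (x.+1)%:Z)%R %% (e%:Z)%R)%Z == (j%:Z)%R).

Definition msize (r : nat) (lam : 'I_r -> part) : nat :=
  \sum_(k < r) psize (lam k).
Definition mres_count (e r : nat) (lam : 'I_r -> part) (s : 'I_r -> int) (j : nat) : nat :=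
  \sum_(k < r) res_count e (lam k) (s k) j.

Definition block_equiv (e r : nat) (lam : 'I_r -> part) (s : 'I_r -> int)
    (mu : 'I_r -> part) (s' : 'I_r -> int) : Prop :=
  (forall k, s k = s' k) /\ msize lam = msize mu /\
  (forall j : nat, (j < e)%N -> mres_count e lam s j = mres_count e mu s' j).

(* Main.v *)
Require Import Defs.
From mathcomp Require Import all_boot all_order all_algebra zify ring.
From Stdlib Require Import Classical ClassicalEpsilon FunctionalExtensionality.
Import Order.TTheory GRing.Theory Num.Theory.
Set Implicit Arguments. Unset Strict Implicit. Unset Printing Implicit Defensive.
Local Open Scope ring_scope.

Definition beta (p : part) (s : int) (x : nat) : int :=
  (nth 0%N (sval p) x.-1)%:Z - x%:Z + s.

Lemma valS (p : part) : val p = sval p. Proof. by []. Qed.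

Lemma beta_setE p s b : beta_set p s b <-> exists x, (1 <= x)%N /\ b = beta p s x.
Proof. by []. Qed.

Lemma part_nth_le (p : part) x : (nth 0%N (sval p) x.+1 <= nth 0%N (sval p) x)%N.
Proof.
case: p => l /= /andP [hs _].
case: (ltnP x.+1 (size l)) => h.
  have tr : transitive (T:=nat) geq by move=> a b c /= h1 h2; lia.
  have rf : reflexive (T:=nat) geq by move=> a /=.
  have := @sorted_leq_nth nat geq tr rf 0%N l hs x x.+1.
  rewrite !inE => H; apply: H => //; lia.
by rewrite (nth_default 0%N h).
Qed.

Lemma part_nth_pos (p : part) x : (x < size (sval p))%N -> (0 < nth 0%N (sval p) x)%N.
Proof.
case: p => l /= /andP [_ ha] hx.
by move/allP: ha; apply; apply: mem_nth.
Qed.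

Lemma beta_decr p s x : beta p s x.+2 < beta p s x.+1.
Proof. rewrite /beta /=. have := part_nth_le p x. move=> H. lia. Qed.

Lemma beta_mono p s x y : (1 <= x)%N -> (x < y)%N -> beta p s y < beta p s x.
Proof.
move=> hx hxy; have [d ->] : exists d, y = (x + d.+1)%N by exists (y - x.+1)%N; lia.
elim: d => [|d IH].
  case: x hx {hxy} => // x _; rewrite addn1; exact: beta_decr.
apply: lt_trans IH.
have -> : (x + d.+2 = (x + d).+2)%N by lia.
have -> : (x + d.+1 = (x + d).+1)%N by lia.
exact: beta_decr.
Qed.

Lemma beta_inj p s x y : (1 <= x)%N -> (1 <= y)%N -> beta p s x = beta p s y -> x = y.
Proof.
move=> hx hy h; case: (ltngtP x y) => // hxy.
  by have := beta_mono p s hx hxy; rewrite h ltxx.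
by have := beta_mono p s hy hxy; rewrite h ltxx.
Qed.

Lemma beta_big p s x : (size (sval p) < x)%N -> beta p s x = s - x%:Z.
Proof. move=> h; rewrite /beta nth_default /=; [lia|lia]. Qed.

Lemma beta_ge p s x : s - x%:Z <= beta p s x.
Proof. rewrite /beta; lia. Qed.

Lemma beta_set_low p s b : b < s - (size (sval p))%:Z -> beta_set p s b.
Proof.
move=> h; exists (absz (s - b)); split; first lia.
have := @beta_big p s (absz (s - b)) ltac:(lia); rewrite /beta => ->; lia.
Qed.

Lemma beta_set_high p s b : beta_set p s b -> b <= beta p s 1.
Proof.
case=> x [hx ->]; case: (ltngtP 1 x) => h; last by rewrite h.
- by apply/ltW/beta_mono.
- lia.
Qed.

Lemma part_nil (p : part) : nth 0%N (sval p) 0 = 0%N -> val p = [::].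
Proof.
move=> h; case E: (sval p) => [|a l] //.
have := @part_nth_pos p 0; rewrite E /= => H. have := H erefl. rewrite E in h. simpl in h. lia.
Qed.

Lemma beta_set_nil p s b : sval p = [::] -> (beta_set p s b <-> b < s).
Proof.
move=> hp; split.
  by case=> x [hx ->]; change (val p) with (sval p); rewrite hp nth_nil; lia.
move=> h; apply: beta_set_low; rewrite hp /=; lia.
Qed.

Lemma is_part_cons a l : (0 < a)%N -> is_part l -> (nth 0%N l 0 <= a)%N -> is_part (a :: l).
Proof.
move=> ha /andP [hs hp] hl; apply/andP; split; last by rewrite /= ha.
case: l hs hp hl => //= b l -> _ ->; done.
Qed.

Lemma beta_cons p s M0 : beta p s 1 < M0 ->
  exists p' : part, forall b, beta_set p' (s + 1) b <-> (b = M0 \/ beta_set p s b).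
Proof.
move=> hM.
have hl : ((nth 0%N (sval p) 0)%:Z <= M0 - s) by move: hM; rewrite /beta /=; lia.
case: (ltnP 0 (absz (M0 - s))) => ha.
  have hpart : is_part (absz (M0 - s) :: sval p).
    apply: is_part_cons => //; first by case: (p) => ? /=. lia.
  exists (exist (fun l => is_part l) _ hpart) => b; split.
    case=> x [hx ->]; case: x hx => [|[|y]] //= _.
      by left; lia.
    right; exists y.+1; split => //; rewrite valS /=; lia.
  case=> [->|[x [hx ->]]].
    by exists 1%N; split => //=; lia.
  exists x.+1; split => //=. case: x hx => //= x _; lia.
have hnil : sval p = [::] by apply: part_nil; lia.
have hs : M0 = s by move: hM; rewrite /beta hnil /=; lia.
exists p => b; rewrite !beta_set_nil //; lia.
Qed.

Lemma realize_aux n : forall (N : int) (P : int -> Prop),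
  (forall b, b < N -> P b) -> (forall b, N + n%:Z <= b -> ~ P b) ->
  exists p s, forall b, P b <-> beta_set p s b.
Proof.
elim: n => [|n IH] N P hlo hhi.
  exists part0, N => b; rewrite beta_set_nil //; split.
    by move=> hb; case: (ltP b N) => // h; exfalso; apply: (hhi b) => //; lia.
  exact: hlo.
case: (classic (P (N + n%:Z))) => hP; last first.
  apply: (IH N P hlo) => b hb; case: (ltgtP b (N + n%:Z)) => h; [move=> _; lia | apply: hhi; lia | by rewrite h].
pose P' b := P b /\ b <> N + n%:Z.
have [p [s hp]] : exists p s, forall b, P' b <-> beta_set p s b.
  apply: (IH N).
    by move=> b hb; split; [apply: hlo | lia].
  move=> b hb [hb1 hb2]; apply: (hhi b) => //; lia.
have hlt : beta p s 1 < N + n%:Z.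
  have : beta_set p s (beta p s 1) by exists 1%N.
  move/hp => [h1 h2]; case: (ltgtP (beta p s 1) (N + n%:Z)) => // h.
  exfalso; apply: (hhi _ _ h1); lia.
have [p' hp'] := beta_cons hlt.
exists p', (s + 1) => b; rewrite hp'; split.
  move=> hb; case: (classic (b = N + n%:Z)) => h; [by left | by right; apply/hp; split].
case=> [->|/hp [h _]] //.
Qed.

Lemma realize (P : int -> Prop) (N M : int) :
  (forall b, b < N -> P b) -> (forall b, M <= b -> ~ P b) ->
  exists p s, forall b, P b <-> beta_set p s b.
Proof.
move=> hlo hhi; apply: (@realize_aux (absz (M - N)) N) => // b hb.
apply: hhi; lia.
Qed.

Lemma beta_le p s x y : (1 <= x)%N -> (x <= y)%N -> beta p s y <= beta p s x.
Proof.
move=> hx; rewrite leq_eqVlt => /orP [/eqP -> //|h].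
exact/ltW/beta_mono.
Qed.

Lemma beta_eq_all p s p' s' : (forall b, beta_set p s b <-> beta_set p' s' b) ->
  forall x, (1 <= x)%N -> beta p s x = beta p' s' x.
Proof.
move=> H x; elim/ltn_ind: x => x IH hx.
have : beta_set p s (beta p s x) by exists x.
move/H => [y [hy ey]]; have {}ey : beta p s x = beta p' s' y := ey.
have : beta_set p' s' (beta p' s' x) by exists x.
move/H => [z [hz ez]]; have {}ez : beta p' s' x = beta p s z := ez.
have hyx : (x <= y)%N.
  case: (ltnP y x) => // h; exfalso.
  have := IH y h hy; rewrite -ey => /(beta_inj hy hx) e1; lia.
have hzx : (x <= z)%N.
  case: (ltnP z x) => // h; exfalso.
  have := IH z h hz; rewrite -ez => /(beta_inj hx hz) e1; lia.
have := beta_le p' s' hx hyx; have := beta_le p s hx hzx.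
rewrite -ey -ez; move=> h1 h2; apply/eqP; rewrite eq_le h1 h2 //.
Qed.

Lemma part_eq (p p' : part) : (forall x, nth 0%N (sval p) x = nth 0%N (sval p') x) -> p = p'.
Proof.
move=> H; apply: val_inj => /=.
have hs : size (sval p) = size (sval p').
  case: (ltngtP (size (sval p)) (size (sval p'))) => // h.
    have := part_nth_pos h; rewrite -H nth_default //; lia.
  have := part_nth_pos h; rewrite H nth_default //; lia.
by apply: (eq_from_nth (x0 := 0%N) hs) => i _; apply: H.
Qed.

Lemma beta_set_uniq p s p' s' : (forall b, beta_set p s b <-> beta_set p' s' b) ->
  p = p' /\ s = s'.
Proof.
move=> H; have E := beta_eq_all H.
have hs : s = s'.
  pose x := (size (sval p) + size (sval p')).+1.
  have := E x erefl; rewrite !beta_big /x; lia.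
split => //; apply: part_eq => x.
have := E x.+1 erefl; rewrite /beta /= hs; lia.
Qed.

Lemma is_eta_uniq e p s rho t rho' t' : is_eta e p s rho t -> is_eta e p s rho' t' ->
  forall i, (i < e)%N -> rho i = rho' i /\ t i = t' i.
Proof.
move=> h1 h2 i hi; apply: beta_set_uniq => c.
by rewrite -h1 // h2.
Qed.

Lemma runner_bounds e p s i : (0 < e)%N ->
  exists N M : int, (forall c, c < N -> runner e (beta_set p s) i c) /\
                    (forall c, M <= c -> ~ runner e (beta_set p s) i c).
Proof.
move=> he.
exists (- (`|s|%:Z + (size (sval p))%:Z + i%:Z + 1)), (`|beta p s 1|%:Z + 1); split.
  move=> c hc; apply: beta_set_low.
  have : c * e%:Z <= c by nia.
  lia.
move=> c hc /beta_set_high h.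
have : c <= c * e%:Z by nia.
lia.
Qed.

Lemma eta_exists e p s : (0 < e)%N -> exists q : (nat -> part) * (nat -> int), is_eta e p s q.1 q.2.
Proof.
move=> he.
pose Q i (q : part * int) := (i < e)%N -> forall c, runner e (beta_set p s) i c <-> beta_set q.1 q.2 c.
have ex : forall i, exists q, Q i q.
  move=> i; case: (ltnP i e) => hi; last by exists (part0, 0) => /= h; lia.
  have [N [M [h1 h2]]] := runner_bounds p s i he.
  have [r [t ht]] := realize h1 h2.
  by exists (r, t) => _.
pose f i := epsilon (inhabits (part0, 0)) (Q i).
exists ((fun i => (f i).1), (fun i => (f i).2)) => i hi c /=.
by apply: (epsilon_spec (inhabits (part0, 0)) (Q i) (ex i)).
Qed.

Lemma eta_spec e p s : (0 < e)%N -> is_eta e p s (eta e p s).1 (eta e p s).2.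
Proof.
move=> he; rewrite /eta.
by apply: (epsilon_spec (inhabits ((fun _ => part0), (fun _ => 0)))
   (fun q => is_eta e p s q.1 q.2) (eta_exists p s he)).
Qed.

Lemma sum_ge_term (f : nat -> nat) n i : (i < n)%N -> (f i <= \sum_(0 <= j < n) f j)%N.
Proof.
elim: n => // n IH hi; rewrite big_nat_recr //=.
case: (ltnP i n) => h; first by have := IH h; lia.
have -> : i = n by lia. lia.
Qed.

Lemma nth0_le_sumn (l : seq nat) : (nth 0%N l 0 <= sumn l)%N.
Proof. case: l => //= a l; lia. Qed.

Lemma modz_runner (e : nat) (c : int) (i : nat) : (i < e)%N ->
  ((c * e%:Z + i%:Z) %% e%:Z)%Z = i%:Z /\ ((c * e%:Z + i%:Z) %/ e%:Z)%Z = c.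
Proof.
move=> hi; split.
  rewrite modzMDl modz_small //; lia.
rewrite divzMDl; last by apply/eqP; lia.
rewrite divz_small ?addr0 //; apply/andP; split; lia.
Qed.

Lemma build e (rho : nat -> part) (t : nat -> int) : (0 < e)%N ->
  exists p s, is_eta e p s rho t.
Proof.
move=> he.
pose idx (b : int) := absz ((b %% e%:Z)%Z).
pose P b := beta_set (rho (idx b)) (t (idx b)) ((b %/ e%:Z)%Z).
have [K hK0] : exists K : nat, forall j, (j < e)%N ->
    (`|t j| + size (sval (rho j)) + sumn (sval (rho j)) <= K)%N.
  exists (\sum_(0 <= j < e) (`|t j| + size (sval (rho j)) + sumn (sval (rho j))))%N => j hj.
  exact: (sum_ge_term (fun j => `|t j| + size (sval (rho j)) + sumn (sval (rho j)))%N hj).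
have hidx : forall b, (idx b < e)%N.
  move=> b; rewrite /idx.
  have := @modz_ge0 b e%:Z ltac:(apply/eqP; lia).
  have := @ltz_pmod b e%:Z ltac:(lia). lia.
have [p [s hps]] : exists p s, forall b, P b <-> beta_set p s b.
  apply: (@realize P (- (K%:Z + 1) * e%:Z) ((K%:Z + 1) * e%:Z)).
    move=> b hb; apply: beta_set_low.
    have hK := hK0 _ (hidx b).
    have : ((b %/ e%:Z)%Z < - (K%:Z + 1)) by rewrite ltz_divLR; lia.
    lia.
  move=> b hb /beta_set_high.
  have hK := hK0 _ (hidx b).
  have : (K%:Z + 1 <= (b %/ e%:Z)%Z) by rewrite lez_divRL; lia.
  have := nth0_le_sumn (sval (rho (idx b))).
  rewrite /beta /=. lia.
exists p, s => i hi c; rewrite /runner -hps /P.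
have [h1 h2] := modz_runner c hi.
by rewrite /idx h1 h2 /=.
Qed.

Definition phi (e j : nat) (b : int) : int := ((b - j%:Z) %/ e%:Z)%Z.

Lemma divz_pred (m : int) (e : nat) : (0 < e)%N ->
  ((m - 1) %/ e%:Z)%Z = (m %/ e%:Z)%Z - (((m %% e%:Z)%Z == 0) : nat)%:Z.
Proof.
move=> he.
have hm := divz_eq m e%:Z.
have h0 := @modz_ge0 m e%:Z ltac:(apply/eqP; lia).
have h1 := @ltz_pmod m e%:Z ltac:(lia).
set q := (m %/ e%:Z)%Z in hm *; set r := (m %% e%:Z)%Z in hm h0 h1 *.
have he0 : e%:Z != 0 by apply/eqP; lia.
case: eqP => hr.
  have -> : m - 1 = (q - 1) * e%:Z + (e%:Z - 1) by rewrite hm hr; ring.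
  rewrite divzMDl // divz_small /=; [ring | apply/andP; split; lia].
have -> : m - 1 = q * e%:Z + (r - 1) by rewrite {1}hm; ring.
rewrite divzMDl // divz_small /=; [ring | apply/andP; split; lia].
Qed.

Lemma phi_step e j b : (0 < e)%N -> (j < e)%N ->
  phi e j (b + 1) - phi e j b = ((((b + 1) %% e%:Z)%Z == j%:Z) : nat)%:Z.
Proof.
move=> he hj; rewrite /phi.
have -> : b - j%:Z = (b + 1 - j%:Z) - 1 by ring.
rewrite divz_pred //.
have -> : ((b + 1 - j%:Z) %% e%:Z == 0)%Z = (((b + 1) %% e%:Z)%Z == j%:Z).
  have h0 := @modz_ge0 (b+1) e%:Z ltac:(apply/eqP; lia).
  have h1 := @ltz_pmod (b+1) e%:Z ltac:(lia).
  have hm := divz_eq (b + 1) e%:Z.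
  set q := ((b + 1) %/ e%:Z)%Z in hm; set r := ((b + 1) %% e%:Z)%Z in hm h0 h1 *.
  case: (ltgtP r j%:Z) => hr.
  - have -> : b + 1 - j%:Z = (q - 1) * e%:Z + (r - j%:Z + e%:Z) by rewrite {1}hm; ring.
    rewrite modzMDl modz_small; [apply/eqP; lia | apply/andP; split; lia].
  - have -> : b + 1 - j%:Z = q * e%:Z + (r - j%:Z) by rewrite {1}hm; ring.
    rewrite modzMDl modz_small; [apply/eqP; lia | apply/andP; split; lia].
  - have -> : b + 1 - j%:Z = q * e%:Z + 0 by rewrite {1}hm hr; ring.
    by rewrite modzMDl modz_small ?eqxx.
ring.
Qed.

Lemma sumPosz (I : Type) (r : seq I) (P : pred I) (F : I -> nat) :
  (\sum_(i <- r | P i) F i)%N%:Z = \sum_(i <- r | P i) (F i)%:Z.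
Proof. by rewrite (big_morph Posz PoszD (erefl _)). Qed.

Lemma cnt_phi e j (a : int) n : (0 < e)%N -> (j < e)%N ->
  (\sum_(y < n) ((((a + (y.+1)%:Z) %% e%:Z)%Z == j%:Z) : nat))%N%:Z
   = phi e j (a + n%:Z) - phi e j a.
Proof.
move=> he hj; elim: n => [|n IH]; first by rewrite big_ord0 addr0 subrr.
rewrite big_ord_recr /= PoszD IH.
have := phi_step (a + n%:Z) he hj.
have -> : a + n%:Z + 1 = a + n.+1%:Z by lia.
move=> h; rewrite -h; ring.
Qed.

Lemma res_count_phi e p s j : (0 < e)%N -> (j < e)%N ->
  (res_count e p s j)%:Z = \sum_(x < size (sval p)) (phi e j (beta p s x.+1) - phi e j (s - x.+1%:Z)).
Proof.
move=> he hj; rewrite /res_count sumPosz; apply: eq_bigr => x _.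
have := cnt_phi (s - x.+1%:Z) (nth 0%N (sval p) x) he hj.
have -> : s - x.+1%:Z + (nth 0%N (sval p) x)%:Z = beta p s x.+1 by rewrite /beta /=; ring.
move=> <-; congr Posz; apply: eq_bigr => y _.
by have -> : s + y.+1%:Z - x.+1%:Z = s - x.+1%:Z + y.+1%:Z by ring.
Qed.

Definition beads (p : part) (s : int) (L : nat) : seq int :=
  [seq beta p s x.+1 | x <- iota 0 L].

Lemma beads_uniq p s L : uniq (beads p s L).
Proof.
rewrite map_inj_in_uniq ?iota_uniq // => x y _ _ /beta_inj H.
by have := H erefl erefl => -[].
Qed.

Lemma mem_beads p s L b : (size (sval p) <= L)%N ->
  (b \in beads p s L) <-> (beta_set p s b /\ s - L%:Z <= b).
Proof.
move=> hL; split.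
  case/mapP => x; rewrite mem_iota => /andP [_ hx] ->; split; first by exists x.+1.
  have := beta_ge p s x.+1; lia.
case=> [hbs hb]; move/beta_setE: hbs => [x [hx hbx]]; rewrite hbx in hb *; apply/mapP; exists x.-1; last by rewrite prednK.
rewrite mem_iota /=.
case: (ltnP L x) => h; last by lia.
by exfalso; move: hb; rewrite beta_big; lia.
Qed.

Definition beadsR e (rho : nat -> part) (t : nat -> int) (N : int) (i : nat) : seq int :=
  [seq (c * e%:Z + i%:Z)%R | c <- beads (rho i) (t i) (absz (t i - N))].

Lemma beadsR_uniq e rho t N i : (0 < e)%N -> uniq (beadsR e rho t N i).
Proof.
move=> he; rewrite map_inj_in_uniq ?beads_uniq // => x y _ _ h.
have : (x - y) * e%:Z = 0 by rewrite mulrBl; apply/eqP; rewrite subr_eq0; apply/eqP; lia.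
by move/eqP; rewrite mulf_eq0 => /orP [/eqP|/eqP]; lia.
Qed.

Lemma perm_runner e p s rho t N i : (0 < e)%N -> (i < e)%N -> is_eta e p s rho t ->
  (N + (size (sval (rho i)))%:Z <= t i) -> (e%:Z * N + (size (sval p))%:Z <= s) ->
  perm_eq [seq b <- beads p s (absz (s - e%:Z * N)%R) | (b %% e%:Z)%Z == i%:Z]
          (beadsR e rho t N i).
Proof.
move=> he hi heta h1 h2.
apply: uniq_perm; [by rewrite filter_uniq ?beads_uniq | exact: beadsR_uniq |].
move=> b; rewrite mem_filter; apply/idP/idP.
  case/andP => /eqP hm hbm.
  have hL : (size (sval p) <= absz (s - e%:Z * N)%R)%N.
    lia.
  have [hb hlow] := (@mem_beads p s _ b hL).1 hbm.
  apply/mapP; exists ((b %/ e%:Z)%Z); last first.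
    by rewrite {1}(divz_eq b e%:Z) hm.
  apply/mem_beads; first lia.
  have hc : b = (b %/ e%:Z)%Z * e%:Z + i%:Z by rewrite {1}(divz_eq b e%:Z) hm.
  split.
    by apply/heta => //; rewrite /runner -hc.
  have : N <= (b %/ e%:Z)%Z by rewrite lez_divRL; lia.
  lia.
case/mapP => c hcm ->.
have hL : (size (sval (rho i)) <= absz (t i - N))%N by lia.
have [hc hlow] := (@mem_beads (rho i) (t i) _ c hL).1 hcm.
have [m1 m2] := modz_runner c hi.
rewrite m1 eqxx /=; apply/mem_beads; first lia.
split; first by apply/heta.
have : N <= c by lia.
nia.
Qed.

Lemma sum_one_mod e (b : int) (v : int) : (0 < e)%N ->
  \sum_(i < e) (if (b %% e%:Z)%Z == (i : nat)%:Z then v else 0) = v.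
Proof.
move=> he.
have h0 := @modz_ge0 b e%:Z ltac:(apply/eqP; lia).
have h1 := @ltz_pmod b e%:Z ltac:(lia).
have hk : (absz (b %% e%:Z)%Z < e)%N by lia.
rewrite (bigD1 (Ordinal hk)) //= big1 ?addr0.
  by have -> : ((b %% e%:Z)%Z == `|(b %% e%:Z)%Z|%N%:Z) by apply/eqP; lia.
move=> k /eqP hk'; case: eqP => // h; exfalso; apply: hk'.
apply: val_inj => /=; lia.
Qed.

Lemma sum_decomp e p s rho t N (F : int -> int) : (0 < e)%N -> is_eta e p s rho t ->
  (forall i, (i < e)%N -> N + (size (sval (rho i)))%:Z <= t i) ->
  (e%:Z * N + (size (sval p))%:Z <= s) ->
  \sum_(b <- beads p s (absz (s - e%:Z * N)%R)) F b
   = \sum_(i < e) \sum_(b <- beadsR e rho t N i) F b.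
Proof.
move=> he heta h1 h2.
rewrite (eq_bigr (fun b => \sum_(i < e) (if (b %% e%:Z)%Z == (i : nat)%:Z then F b else 0)));
  last by move=> b _; rewrite sum_one_mod.
rewrite exchange_big /=; apply: eq_bigr => i _.
rewrite -big_mkcond /= -big_filter.
apply: perm_big; apply: perm_runner => //; exact: h1.
Qed.

Lemma sum1_size (T : Type) (r : seq T) : \sum_(b <- r) (1 : int) = (size r)%:Z.
Proof. elim: r => [|a r IH]; rewrite ?big_nil ?big_cons ?IH //=; lia. Qed.

Lemma phi_runner e j (c : int) (i : nat) : (0 < e)%N -> (i < e)%N -> (j < e)%N ->
  phi e j (c * e%:Z + i%:Z) = c - ((i < j)%N : nat)%:Z.
Proof.
move=> he hi hj; rewrite /phi.
have he0 : e%:Z != 0 by apply/eqP; lia.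
case: (ltnP i j) => hij /=.
  have -> : c * e%:Z + i%:Z - j%:Z = (c - 1) * e%:Z + (i%:Z - j%:Z + e%:Z) by ring.
  rewrite divzMDl // divz_small ?addr0 //; apply/andP; split; lia.
have -> : c * e%:Z + i%:Z - j%:Z = c * e%:Z + (i%:Z - j%:Z) by ring.
rewrite divzMDl // divz_small ?addr0 ?subr0 //; apply/andP; split; lia.
Qed.

Lemma sum_nth_iota (l : seq nat) L : (size l <= L)%N ->
  \sum_(x <- iota 0 L) (nth 0%N l x)%:Z = (sumn l)%:Z.
Proof.
elim: l L => [|a l IH] L hL.
  by rewrite big1_seq //= => x _; rewrite nth_nil.
case: L hL => // L hL.
rewrite /= big_cons /= PoszD -(IH L) //; congr (_ + _).
by rewrite -(addn0 1%N) iotaDl big_map; apply: eq_bigr.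
Qed.

Lemma res_count_iota e p s j L : (0 < e)%N -> (j < e)%N -> (size (sval p) <= L)%N ->
  (res_count e p s j)%:Z =
    \sum_(x <- iota 0 L) phi e j (beta p s x.+1) - \sum_(x <- iota 0 L) phi e j (s - x.+1%:Z).
Proof.
move=> he hj hL; rewrite res_count_phi // -sumrB.
rewrite -(big_mkord xpredT (fun x => phi e j (beta p s x.+1) - phi e j (s - x.+1%:Z))).
rewrite /index_iota subn0.
have -> : L = (size (sval p) + (L - size (sval p)))%N by lia.
rewrite iotaD big_cat /= [X in _ + X]big1_seq ?addr0 //.
move=> x /andP [_]; rewrite mem_iota => /andP [hx _].
by rewrite beta_big ?subrr //; lia.
Qed.

Definition Rsum (t : int) (m : nat) : int := \sum_(x <- iota 0 m) (t - x.+1%:Z).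
Definition Qf e j (t : nat -> int) (N : int) : int :=
  \sum_(i < e) (Rsum (t i) (absz (t i - N)) - (absz (t i - N))%:Z * ((i < j)%N : nat)%:Z).
Definition Ef e j (s N : int) : int :=
  \sum_(x <- iota 0 (absz (s - e%:Z * N)%R)) phi e j (s - x.+1%:Z).

Lemma sumc_size (T : Type) (r : seq T) (c : int) : \sum_(b <- r) c = (size r)%:Z * c.
Proof. elim: r => [|a r IH]; rewrite ?big_nil ?big_cons ?IH //=; lia. Qed.

Lemma content e p s rho t N j : (0 < e)%N -> (j < e)%N -> is_eta e p s rho t ->
  (forall i, (i < e)%N -> N + (size (sval (rho i)))%:Z <= t i) ->
  (e%:Z * N + (size (sval p))%:Z <= s) ->
  (res_count e p s j)%:Z = (\sum_(i < e) psize (rho i))%N%:Z + Qf e j t N - Ef e j s N.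
Proof.
move=> he hj heta h1 h2.
have hL : (size (sval p) <= absz (s - e%:Z * N)%R)%N by lia.
rewrite (@res_count_iota e p s j _ he hj hL) -/(Ef e j s N).
rewrite -(big_map (fun x => beta p s x.+1) xpredT (phi e j)) -/(beads _ _ _).
rewrite (sum_decomp _ he heta h1 h2) sumPosz /Qf -big_split /=.
congr (_ - _); apply: eq_bigr => i _.
rewrite /beadsR big_map /beads big_map.
rewrite (eq_bigr (fun x => beta (rho i) (t i) x.+1 - ((i < j)%N : nat)%:Z)); last first.
  by move=> x _; rewrite phi_runner.
rewrite sumrB sumc_size size_iota.
have -> : \sum_(x <- iota 0 `|(t i - N)%R|) beta (rho i) (t i) x.+1 =
   \sum_(x <- iota 0 `|(t i - N)%R|) ((nth 0%N (sval (rho i)) x)%:Z + (t i - x.+1%:Z)).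
  by apply: eq_bigr => x _; rewrite /beta /=; ring.
rewrite big_split /= sum_nth_iota; last by have := h1 i (ltn_ord i); lia.
rewrite /Rsum /psize; ring.
Qed.

Lemma charge e p s rho t N : (0 < e)%N -> is_eta e p s rho t ->
  (forall i, (i < e)%N -> N + (size (sval (rho i)))%:Z <= t i) ->
  (e%:Z * N + (size (sval p))%:Z <= s) ->
  \sum_(i < e) t i = s.
Proof.
move=> he heta h1 h2.
have := sum_decomp (fun _ => 1) he heta h1 h2.
rewrite sum1_size size_map size_iota.
rewrite (eq_bigr (fun i : 'I_e => t i - N)); last first.
  move=> i _; rewrite sum1_size size_map size_map size_iota.
  have := h1 i (ltn_ord i); lia.
rewrite sumrB sumr_const card_ord -mulr_natr natz.
move=> H; have -> : \sum_(i < e) t i = (absz (s - e%:Z * N)%R)%:Z + N * e%:Z by rewrite H; ring.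
rewrite [N * _]mulrC; lia.
Qed.

Definition Tv e p s := (eta e p s).2.

Definition Nok e (p : part) (s : int) (N : int) : Prop :=
  (forall i, (i < e)%N -> N + (size (sval ((eta e p s).1 i)))%:Z <= (eta e p s).2 i) /\
  e%:Z * N + (size (sval p))%:Z <= s.

Lemma Nok_down e p s N N' : N' <= N -> Nok e p s N -> Nok e p s N'.
Proof.
move=> hN [h1 h2]; split.
  move=> i hi; have := h1 i hi; lia.
have : e%:Z * N' <= e%:Z * N by apply: ler_wpM2l; lia.
lia.
Qed.

Lemma exists_Nok e p s : (0 < e)%N -> exists N, Nok e p s N.
Proof.
move=> he.
pose t := (eta e p s).2; pose rho := (eta e p s).1.
pose K := (\sum_(0 <= j < e) (`|t j| + size (sval (rho j))))%N.
exists (- (K%:Z + `|s|%:Z + (size (sval p))%:Z)); split.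
  move=> i hi; have := sum_ge_term (fun j => `|t j| + size (sval (rho j)))%N hi.
  rewrite -/K /=. rewrite -/t -/rho. lia.
set M := - _.
have hM : M <= 0 by rewrite /M; lia.
have : e%:Z * M <= M by nia.
rewrite /M; lia.
Qed.

Lemma Nok_charge e p s N : (0 < e)%N -> Nok e p s N -> \sum_(i < e) Tv e p s i = s.
Proof. move=> he [h1 h2]; exact: (charge he (eta_spec p s he) h1 h2). Qed.

Lemma Nok_content e p s N j : (0 < e)%N -> (j < e)%N -> Nok e p s N ->
  (res_count e p s j)%:Z = (wt e p s)%:Z + Qf e j (Tv e p s) N - Ef e j s N.
Proof. move=> he hj [h1 h2]; have := @content e p s _ _ N j he hj (eta_spec p s he) h1 h2. by []. Qed.

Definition rowp (w : nat) : part :=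
  if w is w'.+1 then exist (fun l => is_part l) [:: w'.+1] erefl else part0.

Definition rhow (w : nat) (i : nat) : part := if i == 0%N then rowp w else part0.

Lemma psize_rowp w : psize (rowp w) = w.
Proof. by case: w => //= w; rewrite /psize /= addn0. Qed.

Lemma eta_of e p s rho t : (0 < e)%N -> is_eta e p s rho t ->
  (forall i, (i < e)%N -> Tv e p s i = t i) /\ wt e p s = (\sum_(i < e) psize (rho i))%N.
Proof.
move=> he h; have hu := is_eta_uniq (eta_spec p s he) h.
split; first by move=> i hi; have [_ E] := hu i hi; rewrite /Tv E.
by rewrite /wt; apply: eq_bigr => i _; have [-> _] := hu i (ltn_ord i).
Qed.

Lemma sum_rhow e w : (0 < e)%N -> (\sum_(i < e) psize (rhow w i))%N = w.
Proof.
case: e => // e _; rewrite big_ord_recl /= big1 ?addn0 ?psize_rowp //.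
Qed.

Lemma build_multi e r (t : 'I_r -> nat -> int) (w : 'I_r -> nat) (s : 'I_r -> int) :
  (0 < e)%N -> (forall k, \sum_(i < e) t k i = s k) ->
  exists nu : 'I_r -> part, forall k,
    (forall i, (i < e)%N -> Tv e (nu k) (s k) i = t k i) /\ wt e (nu k) (s k) = w k.
Proof.
move=> he hs.
have ex : forall k, exists p : part, is_eta e p (s k) (rhow (w k)) (t k).
  move=> k; have [p [s' h]] := build (rhow (w k)) (t k) he.
  have [N hN] := exists_Nok p s' he.
  have [ht _] := eta_of he h.
  have := Nok_charge he hN.
  rewrite (eq_bigr (fun i : 'I_e => t k i)); last by move=> i _; rewrite ht.
  by rewrite hs => E; exists p; rewrite E.
pose nu k := epsilon (inhabits part0) (fun p => is_eta e p (s k) (rhow (w k)) (t k)).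
exists nu => k.
have h := epsilon_spec (inhabits part0) (fun p => is_eta e p (s k) (rhow (w k)) (t k)) (ex k).
have [h1 h2] := eta_of he h.
by split => //; rewrite h2 sum_rhow.
Qed.

Lemma ord_sum_ge r (f : 'I_r -> nat) k : (f k <= \sum_(k0 < r) f k0)%N.
Proof. by rewrite (bigD1 k) //=; apply: leq_addr. Qed.

Lemma exists_Nok_multi e r (lam : 'I_r -> part) (s : 'I_r -> int) : (0 < e)%N ->
  exists N, forall N', N' <= N -> forall k, Nok e (lam k) (s k) N'.
Proof.
move=> he.
have ex k := exists_Nok (lam k) (s k) he.
pose Nk k := epsilon (inhabits 0) (fun N => Nok e (lam k) (s k) N).
have hNk k : Nok e (lam k) (s k) (Nk k) := epsilon_spec (inhabits 0) _ (ex k).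
exists (- (\sum_(k < r) `|Nk k|)%N%:Z) => N' hN' k.
apply: (Nok_down _ (hNk k)).
have := ord_sum_ge (fun k => `|Nk k|)%N k; lia.
Qed.

Lemma psize_res e p s : (0 < e)%N ->
  (psize p)%:Z = \sum_(j < e) (res_count e p s j)%:Z.
Proof.
move=> he.
rewrite (eq_bigr (fun j : 'I_e => \sum_(x < size (sval p)) \sum_(y < nth 0%N (sval p) x)
   ((((s + (y.+1)%:Z - (x.+1)%:Z) %% e%:Z)%Z == (j : nat)%:Z) : nat)%:Z)); last first.
  by move=> j _; rewrite /res_count !sumPosz; apply: eq_bigr => x _; rewrite sumPosz.
rewrite exchange_big /=.
rewrite (eq_bigr (fun x : 'I_(size (sval p)) => (nth 0%N (sval p) x)%:Z)); last first.
  move=> x _; rewrite exchange_big /=.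
  rewrite (eq_bigr (fun _ => 1)); first by rewrite sumr_const card_ord -natz /=.
  move=> y _; rewrite -(@sum_one_mod e (s + (y.+1)%:Z - (x.+1)%:Z) 1 he).
  by apply: eq_bigr => j _; case: eqP.
rewrite -(big_mkord xpredT (fun x => (nth 0%N (sval p) x)%:Z)) /index_iota subn0.
by rewrite sum_nth_iota.
Qed.

Lemma mres_int e r (lam : 'I_r -> part) s N j : (0 < e)%N -> (j < e)%N ->
  (forall k, Nok e (lam k) (s k) N) ->
  (mres_count e lam s j)%:Z =
    \sum_(k < r) ((wt e (lam k) (s k))%:Z + Qf e j (Tv e (lam k) (s k)) N - Ef e j (s k) N).
Proof.
move=> he hj hN; rewrite /mres_count sumPosz; apply: eq_bigr => k _.
exact: Nok_content.
Qed.

Lemma block_of e r (lam nu : 'I_r -> part) s N : (0 < e)%N ->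
  (forall k, Nok e (lam k) (s k) N) -> (forall k, Nok e (nu k) (s k) N) ->
  (forall j, (j < e)%N ->
     \sum_(k < r) ((wt e (lam k) (s k))%:Z + Qf e j (Tv e (lam k) (s k)) N) =
     \sum_(k < r) ((wt e (nu k) (s k))%:Z + Qf e j (Tv e (nu k) (s k)) N)) ->
  block_equiv e lam s nu s.
Proof.
move=> he h1 h2 H.
have hm : forall j, (j < e)%N -> mres_count e lam s j = mres_count e nu s j.
  move=> j hj; apply/eqP; rewrite -eqz_nat; apply/eqP.
  rewrite (@mres_int e r lam s N j he hj h1) (@mres_int e r _ _ N j he hj h2) !sumrB H //.
split => //; split => //.
apply/eqP; rewrite -eqz_nat; apply/eqP.
have E (m : 'I_r -> part) : (msize m)%:Z = \sum_(j < e) (mres_count e m s j)%:Z.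
  rewrite /msize sumPosz (eq_bigr (fun k => \sum_(j < e) (res_count e (m k) (s k) j)%:Z)).
    by rewrite exchange_big /=; apply: eq_bigr => j _; rewrite sumPosz.
  by move=> k _; rewrite (@psize_res e _ (s k) he).
by rewrite !E; apply: eq_bigr => j _; rewrite hm.
Qed.

Lemma block_inv e r (lam mu : 'I_r -> part) s s' N : (0 < e)%N ->
  block_equiv e lam s mu s' ->
  (forall k, Nok e (lam k) (s k) N) -> (forall k, Nok e (mu k) (s' k) N) ->
  (forall j, (j < e)%N ->
     \sum_(k < r) ((wt e (lam k) (s k))%:Z + Qf e j (Tv e (lam k) (s k)) N) =
     \sum_(k < r) ((wt e (mu k) (s' k))%:Z + Qf e j (Tv e (mu k) (s' k)) N)).
Proof.
move=> he [hs [_ hm]] h1 h2 j hj.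
have := congr1 Posz (hm j hj).
rewrite (@mres_int e r lam s N j he hj h1) (@mres_int e r _ _ N j he hj h2) !sumrB.
have -> : \sum_(k < r) Ef e j (s' k) N = \sum_(k < r) Ef e j (s k) N.
  by apply: eq_bigr => k _; rewrite hs.
move=> H; have := congr1 (fun z => z + \sum_(k < r) Ef e j (s k) N) H.
by rewrite !subrK.
Qed.

Definition dl (i j : nat) : int := ((i < j)%N : nat)%:Z.
Definition qterm (j : nat) (N : int) (i : nat) (x : int) : int :=
  Rsum x (absz (x - N)%R) - (absz (x - N)%R)%:Z * dl i j.

Lemma QfE e j t N : Qf e j t N = \sum_(i < e) qterm j N i (t i).
Proof. by []. Qed.

Lemma Rsum_step x N : N <= x -> Rsum (x + 1) (absz (x + 1 - N)%R) = Rsum x (absz (x - N)%R) + x.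
Proof.
move=> h.
have -> : absz (x + 1 - N)%R = (absz (x - N)%R).+1 by lia.
rewrite /Rsum /= big_cons.
rewrite -(addn0 1%N) iotaDl big_map /=.
rewrite (eq_bigr (fun y => x - y.+1%:Z)); last by move=> y _; lia.
rewrite [RHS]addrC; congr (_ + _); lia.
Qed.

Lemma qterm_step j N i x : N <= x -> qterm j N i (x + 1) = qterm j N i x + x - dl i j.
Proof.
move=> h; rewrite /qterm Rsum_step //.
have -> : absz (x + 1 - N)%R = (absz (x - N)%R).+1 by lia.
rewrite -addn1 PoszD; ring.
Qed.

Definition upd (t : nat -> int) (i : nat) (d : int) : nat -> int :=
  fun x => if x == i then t i + d else t x.

Lemma Qf_upd e j t N i d : (i < e)%N ->
  Qf e j (upd t i d) N = Qf e j t N + (qterm j N i (t i + d) - qterm j N i (t i)).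
Proof.
move=> hi; rewrite !QfE (bigD1 (Ordinal hi)) //= [X in _ = X + _](bigD1 (Ordinal hi)) //=.
rewrite /upd eqxx.
have -> : \sum_(k < e | k != Ordinal hi) qterm j N k (if (k : nat) == i then t i + d else t k)
        = \sum_(k < e | k != Ordinal hi) qterm j N k (t k).
  apply: eq_bigr => k hk; case: eqP => // hki; exfalso.
  by move/eqP: hk; apply; apply: val_inj.
ring.
Qed.

Lemma qterm_plus j N i x : N <= x -> qterm j N i (x + 1) - qterm j N i x = x - dl i j.
Proof. move=> h; rewrite qterm_step //; ring. Qed.

Lemma qterm_minus j N i x : N <= x - 1 -> qterm j N i (x + -1) - qterm j N i x = - (x - 1) + dl i j.
Proof.
move=> h; have := qterm_step j i h.
have -> : x - 1 + 1 = x by ring.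
move=> ->; ring.
Qed.

Lemma Qf_diff e j t N : (j < e)%N -> (forall i, (i < e)%N -> N <= t i) ->
  Qf e j t N - Qf e j.+1 t N = t j - N.
Proof.
move=> hj hN; rewrite !QfE -sumrB (bigD1 (Ordinal hj)) //= big1 ?addr0.
  rewrite /qterm /dl ltnn ltnSn /=; have := hN j hj; lia.
move=> k /eqP hk; rewrite /qterm /dl.
have hkj : (k : nat) != j by apply/eqP => h; apply: hk; apply: val_inj.
have -> : ((k < j.+1)%N) = (k < j)%N by rewrite ltnS leq_eqVlt (negbTE hkj).
ring.
Qed.

Lemma mono_diff (f : nat -> int) (n : nat) (c : int) :
  (forall i, (i < n)%N -> c <= f i.+1 - f i) ->
  forall i i', (i <= i')%N -> (i' <= n)%N -> (i' - i)%:Z * c <= f i' - f i.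
Proof.
move=> H i i' hii'; have [d ->] : exists d, i' = (i + d)%N by exists (i' - i)%N; lia.
elim: d => [|d IH] hn; first by rewrite addn0 subnn /= mul0r; lia.
have := IH ltac:(lia); have := H (i + d)%N ltac:(lia).
have -> : (i + d.+1 - i = (i + d - i).+1)%N by lia.
rewrite !addKn addnS => h1 h2; rewrite -addn1 PoszD mulrDl mul1r; lia.
Qed.

Lemma common3 e r (a b c : 'I_r -> part) (s : 'I_r -> int) : (0 < e)%N ->
  exists N, forall k, Nok e (a k) (s k) (N + 1) /\ Nok e (b k) (s k) (N + 1) /\
     Nok e (c k) (s k) (N + 1).
Proof.
move=> he.
have [N1 h1] := exists_Nok_multi a s he.
have [N2 h2] := exists_Nok_multi b s he.
have [N3 h3] := exists_Nok_multi c s he.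
exists (- (`|N1|%:Z + `|N2|%:Z + `|N3|%:Z) - 1) => k.
split; [apply: h1|split; [apply: h2|apply: h3]]; lia.
Qed.

Lemma Nok_pred e p s N : Nok e p s (N + 1) -> Nok e p s N.
Proof. apply: Nok_down; lia. Qed.

Lemma Qf_ext e j t t' N : (forall i, (i < e)%N -> t i = t' i) -> Qf e j t N = Qf e j t' N.
Proof. by move=> h; rewrite !QfE; apply: eq_bigr => i _; rewrite h. Qed.

Lemma sum_upd e t i d : (i < e)%N -> \sum_(x < e) upd t i d x = \sum_(x < e) t x + d.
Proof.
move=> hi; rewrite (bigD1 (Ordinal hi)) //= [X in _ = X + _](bigD1 (Ordinal hi)) //=.
rewrite /upd eqxx.
have -> : \sum_(k < e | k != Ordinal hi) (if (k : nat) == i then t i + d else t k)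
        = \sum_(k < e | k != Ordinal hi) t k.
  apply: eq_bigr => k hk; case: eqP => // hki; exfalso.
  by move/eqP: hk; apply; apply: val_inj.
ring.
Qed.

Lemma sum2 r (F : 'I_r -> int) k k' : k != k' ->
  \sum_(x < r) F x = F k + F k' + \sum_(x < r | (x != k) && (x != k')) F x.
Proof.
move=> hk; rewrite (bigD1 k) //= (bigD1 k') //=; last by rewrite eq_sym.
by rewrite addrA; congr (_ + _); apply: eq_bigl => x; rewrite andbC.
Qed.

Lemma rouq_of e (p : part) s (t : nat -> int) (w : nat) :
  (0 < e)%N -> rouquier_part e p s -> (forall i, (i < e)%N -> Tv e p s i = t i) -> wt e p s = w ->
  forall i i', (i <= i')%N -> (i' <= e.-1)%N -> (i' - i)%:Z * (w%:Z - 1) <= t i' - t i.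
Proof.
move=> he hR ht hw i i' h1 h2.
apply: (mono_diff (n := e.-1)) => // x hx.
have := hR x hx; rewrite -!/(Tv e p s) !ht ?hw; [lia | lia | lia].
Qed.

Theorem lemma3p18 (e : nat) (he : (2 <= e)%N) (r : nat) (hr : (1 <= r)%N)
  (lam : 'I_r -> part) (s : 'I_r -> int)
  (HR : forall (mu : 'I_r -> part) (s' : 'I_r -> int),
      block_equiv e lam s mu s' -> rouquier_multi e mu s')
  (Hnc : exists (mu : 'I_r -> part) (s' : 'I_r -> int),
      block_equiv e lam s mu s' /\ exists k : 'I_r, (0 < wt e (mu k) (s' k))%N) :
  forall (k : 'I_r) (i i' : nat), (i < i')%N -> (i' <= e.-1)%N ->
    (-1 <= (eta e (lam k) (s k)).2 i' - (eta e (lam k) (s k)).2 i)%R.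
Proof.
move=> k i i' hii' hi'.
have he0 : (0 < e)%N by lia.
have hi'e : (i' < e)%N by lia.
have hie : (i < e)%N by lia.
pose T k0 := Tv e (lam k0) (s k0).
pose W k0 := wt e (lam k0) (s k0).
change (-1 <= T k i' - T k i).
have hcharge : forall k0, \sum_(x < e) T k0 x = s k0.
  move=> k0; have [N hN] := exists_Nok (lam k0) (s k0) he0; exact: Nok_charge hN.
have hWsum : (\sum_(k0 < r) (W k0)%:Z) = (\sum_(k0 < r) W k0)%N%:Z by rewrite sumPosz.
case: (posnP (\sum_(k0 < r) W k0)%N) => hW; last first.
  pose Wl := (\sum_(k0 < r) W k0)%N.
  have [nu hnu] := @build_multi e r T (fun k0 => if k0 == k then Wl else 0%N) s he0 hcharge.
  have [N hN] := common3 lam nu nu s he0.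
  have hbl : block_equiv e lam s nu s.
    apply: (@block_of e r lam nu s N he0).
    - by move=> k0; apply: Nok_pred; case: (hN k0).
    - by move=> k0; apply: Nok_pred; case: (hN k0) => _ [].
    move=> j hj; rewrite !big_split /=; congr (_ + _).
      rewrite hWsum (eq_bigr (fun k0 => ((if k0 == k then Wl else 0%N) : nat)%:Z)); last first.
        by move=> k0 _; rewrite (hnu k0).2.
      have E : \sum_(k0 < r) (((if k0 == k then Wl else 0%N) : nat)%:Z) = Wl%:Z.
        rewrite (bigD1 k) //= eqxx big1 ?addr0 // => k0 /negbTE -> //.
      by rewrite E.
    apply: eq_bigr => k0 _; apply: Qf_ext => x hx; by rewrite (hnu k0).1.
  have := rouq_of he0 (HR nu s hbl k) (hnu k).1 (hnu k).2 (ltnW hii') hi'.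
  rewrite eqxx => H.
  have : 0 <= (i' - i)%:Z * (Wl%:Z - 1) by apply: mulr_ge0; lia.
  lia.
have hW0 : forall k0, W k0 = 0%N.
  by move=> k0; have := ord_sum_ge W k0; rewrite hW; lia.
have [//|hlt] := lerP (-1) (T k i' - T k i).
exfalso.
case: Hnc => mu [s' [hbm [k0 hk0]]].
have hs : s' = s by apply: functional_extensionality => x; rewrite (proj1 hbm).
subst s'.
pose Tm k1 := Tv e (mu k1) (s k1).
pose Wm k1 := wt e (mu k1) (s k1).
pose Wmt := (\sum_(k1 < r) Wm k1)%N.
have hWmt : (0 < Wmt)%N.
  have := ord_sum_ge Wm k0; rewrite -/Wmt; move: hk0; rewrite -/(Wm k0); lia.
have hcm : forall k1, \sum_(x < e) Tm k1 x = s k1.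
  move=> k1; have [N hN] := exists_Nok (mu k1) (s k1) he0; exact: Nok_charge hN.
have hmono : forall k1, Tm k1 i <= Tm k1 i'.
  move=> k1.
  have [nu hnu] := @build_multi e r Tm (fun k2 => if k2 == k1 then Wmt else 0%N) s he0 hcm.
  have [N hN] := common3 lam mu nu s he0.
  have hbl : block_equiv e lam s nu s.
    apply: (@block_of e r lam nu s N he0).
    - by move=> k2; apply: Nok_pred; case: (hN k2).
    - by move=> k2; apply: Nok_pred; case: (hN k2) => _ [].
    move=> j hj.
    rewrite (@block_inv e r lam mu s s N he0 hbm) //; last first.
    - by move=> k2; apply: Nok_pred; case: (hN k2) => _ [].
    - by move=> k2; apply: Nok_pred; case: (hN k2).
    rewrite !big_split /=; congr (_ + _).
      transitivity (Wmt%:Z); first by rewrite /Wmt sumPosz.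
      rewrite (eq_bigr (fun k2 => ((if k2 == k1 then Wmt else 0%N) : nat)%:Z)); last first.
        by move=> k2 _; rewrite (hnu k2).2.
      have E : \sum_(k2 < r) (((if k2 == k1 then Wmt else 0%N) : nat)%:Z) = Wmt%:Z.
        rewrite (bigD1 k1) //= eqxx big1 ?addr0 // => k2 /negbTE -> //.
      by rewrite E.
    apply: eq_bigr => k2 _; apply: Qf_ext => x hx; by rewrite (hnu k2).1.
  have := rouq_of he0 (HR nu s hbl k1) (hnu k1).1 (hnu k1).2 (ltnW hii') hi'.
  rewrite eqxx => H.
  have : 0 <= (i' - i)%:Z * (Wmt%:Z - 1) by apply: mulr_ge0; lia.
  lia.
have hsum : forall x, (x < e)%N -> \sum_(k1 < r) T k1 x = \sum_(k1 < r) Tm k1 x.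
  have [N hN] := common3 lam mu mu s he0.
  have hNl : forall k1, Nok e (lam k1) (s k1) N by move=> k1; apply: Nok_pred; case: (hN k1).
  have hNm : forall k1, Nok e (mu k1) (s k1) N by move=> k1; apply: Nok_pred; case: (hN k1) => _ [].
  have hb := @block_inv e r lam mu s s N he0 hbm hNl hNm.
  have hlow : forall x, (x.+1 < e)%N -> \sum_(k1 < r) T k1 x = \sum_(k1 < r) Tm k1 x.
    move=> x hx.
    have e1 := hb x (ltnW hx); have e2 := hb x.+1 hx.
    have H : \sum_(k1 < r) (Qf e x (T k1) N - Qf e x.+1 (T k1) N) =
             \sum_(k1 < r) (Qf e x (Tm k1) N - Qf e x.+1 (Tm k1) N).
      have := congr2 (fun a b => a - b) e1 e2; rewrite /= -!sumrB.
      have -> : \sum_(k1 < r) ((wt e (lam k1) (s k1))%:Z + Qf e x (Tv e (lam k1) (s k1)) N -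
           ((wt e (lam k1) (s k1))%:Z + Qf e x.+1 (Tv e (lam k1) (s k1)) N)) =
           \sum_(k1 < r) (Qf e x (T k1) N - Qf e x.+1 (T k1) N).
        by apply: eq_bigr => k1 _; rewrite /T; ring.
      have -> : \sum_(k1 < r) ((wt e (mu k1) (s k1))%:Z + Qf e x (Tv e (mu k1) (s k1)) N -
           ((wt e (mu k1) (s k1))%:Z + Qf e x.+1 (Tv e (mu k1) (s k1)) N)) =
           \sum_(k1 < r) (Qf e x (Tm k1) N - Qf e x.+1 (Tm k1) N).
        by apply: eq_bigr => k1 _; rewrite /Tm; ring.
      done.
    rewrite (eq_bigr (fun k1 => T k1 x - N)) in H; last first.
      move=> k1 _; apply: Qf_diff; first exact: ltnW hx; move=> y hy; case: (hNl k1) => h1 _; have := h1 y hy; rewrite /T /Tv; lia.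
    rewrite [X in _ = X](eq_bigr (fun k1 => Tm k1 x - N)) in H; last first.
      move=> k1 _; apply: Qf_diff; first exact: ltnW hx; move=> y hy; case: (hNm k1) => h1 _; have := h1 y hy; rewrite /Tm /Tv; lia.
    move: H; rewrite !sumrB => H; have := congr1 (fun z => z + \sum_(k1 < r) N) H; by rewrite /= !subrK.
  move=> x hx; case: (ltnP x.+1 e) => hx1; first exact: hlow.
  have hxe : x = e.-1 by lia.
  have HH : \sum_(k1 < r) \sum_(y < e) T k1 y = \sum_(k1 < r) \sum_(y < e) Tm k1 y.
    by apply: eq_bigr => k1 _; rewrite hcharge hcm.
  rewrite exchange_big [RHS]exchange_big /= in HH.
  move: HH; case: (e) hx hxe hlow => // e' hx -> hlow.
  rewrite !big_ord_recr /=.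
  rewrite (eq_bigr (fun y : 'I_e' => \sum_(k1 < r) Tm k1 y)); last first.
    by move=> y _; apply: hlow; rewrite ltnS.
  by move=> HH; apply: (addrI _ HH).
pose X k1 := (Tm k1 i - T k1 i) - (Tm k1 i' - T k1 i').
have hX0 : \sum_(k1 < r) X k1 = 0.
  rewrite /X !sumrB (hsum i hie) (hsum i' hi'e); ring.
have [k' [hk'k hXk']] : exists k', k' != k /\ 1 <= X k'.
  apply: NNPP => hno.
  have hle : \sum_(k1 < r | k1 != k) X k1 <= 0.
    have H0 : forall k1 : 'I_r, k1 != k -> X k1 <= (fun _ => (0:int)) k1.
      move=> k1 hk1; case: (lerP (X k1) 0) => // h; exfalso; apply: hno.
      by exists k1; split => //; lia.
    by have := @ler_sum _ _ (index_enum 'I_r) (fun k1 => k1 != k) X (fun _ => 0) H0; rewrite big1_eq.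
  have hXk : X k <= -2 by have := hmono k; rewrite /X; lia.
  have : X k + \sum_(k1 < r | k1 != k) X k1 = 0 by move: hX0; rewrite (bigD1 k) //=.
  lia.
have hD' : T k' i - T k' i' <= -1 by have := hmono k'; rewrite /X in hXk'; lia.
have hii : i != i' by rewrite neq_ltn hii'.
have hi'i : i' != i by rewrite eq_sym.
pose Wn := absz ((T k i - T k i') - (T k' i - T k' i') - 2)%R.
pose tn k1 := if k1 == k then upd (upd (T k) i (-1)) i' 1
              else if k1 == k' then upd (upd (T k') i 1) i' (-1) else T k1.
pose wn k1 := if k1 == k' then Wn else 0%N.
have hkk' : (k' == k) = false by apply/negbTE.
have htn : forall k1, \sum_(x < e) tn k1 x = s k1.
  move=> k1; rewrite /tn; case: eqP => [->|_].
    by rewrite sum_upd // sum_upd // hcharge; ring.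
  case: eqP => [->|_]; last exact: hcharge.
  by rewrite sum_upd // sum_upd // hcharge; ring.
have [nu hnu] := @build_multi e r tn wn s he0 htn.
have [N hN] := common3 lam nu nu s he0.
have hNl : forall k1, Nok e (lam k1) (s k1) N by move=> k1; apply: Nok_pred; case: (hN k1).
have hbl : block_equiv e lam s nu s.
  apply: (@block_of e r lam nu s N he0) => //.
    by move=> k2; apply: Nok_pred; case: (hN k2) => _ [].
  move=> j hj.
  rewrite [RHS](eq_bigr (fun k1 => (wn k1)%:Z + Qf e j (tn k1) N)); last first.
    move=> k1 _; rewrite (hnu k1).2; congr (_ + _); apply: Qf_ext => x hx; by rewrite (hnu k1).1.
  rewrite (sum2 _ (negbT hkk')) [RHS](sum2 _ (negbT hkk')).
  have -> : \sum_(x < r | (x != k') && (x != k)) ((wt e (lam x) (s x))%:Z + Qf e j (Tv e (lam x) (s x)) N)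
          = \sum_(x < r | (x != k') && (x != k)) ((wn x)%:Z + Qf e j (tn x) N).
    apply: eq_bigr => x /andP [h1 h2]; rewrite /wn /tn (negbTE h1) (negbTE h2).
    by rewrite -/(W x) hW0.
  rewrite /wn /tn eqxx hkk' eqxx -/(W k) -/(W k') !hW0.
  have hNk : forall y, (y < e)%N -> N + 1 <= T k y.
    move=> y hy; case: (hN k) => [[h1 _] _]; have := h1 y hy; rewrite /T /Tv; lia.
  have hNk' : forall y, (y < e)%N -> N + 1 <= T k' y.
    move=> y hy; case: (hN k') => [[h1 _] _]; have := h1 y hy; rewrite /T /Tv; lia.
  have hkk2 : (k == k') = false by rewrite eq_sym.
  rewrite hkk2.
  change (Tv e (lam k) (s k)) with (T k); change (Tv e (lam k') (s k')) with (T k').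
  rewrite !Qf_upd //.
  rewrite /upd (negbTE hi'i).
  have A1 := hNk i hie; have A2 := hNk i' hi'e; have A3 := hNk' i hie; have A4 := hNk' i' hi'e.
  rewrite qterm_minus; last lia.
  rewrite qterm_minus; last lia.
  rewrite qterm_plus; last lia.
  rewrite qterm_plus; last lia.
  rewrite /Wn; lia.
have := rouq_of he0 (HR nu s hbl k') (hnu k').1 (hnu k').2 (ltnW hii') hi'.
rewrite /tn hkk' eqxx /upd (negbTE hi'i) eqxx (negbTE hii) eqxx => H.
have hWn : (Wn%:Z - 1) <= (i' - i)%:Z * (Wn%:Z - 1).
  have : 1 <= (i' - i)%:Z by lia.
  have : 0 <= Wn%:Z - 1 by rewrite /Wn; lia.
  nia.
move: H; rewrite /wn eqxx => H.
have hWnE : Wn%:Z = (T k i - T k i') - (T k' i - T k' i') - 2 by rewrite /Wn; lia.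
lia.
Qed.
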